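(* Let $n\ge1$ and $c\ge2$ be integers and $C=\{0,1,\dots,c-1\}\subseteq\mathbb{Z}/n\mathbb{Z}$. For all nonempty $A,B\subseteq\mathbb{Z}/n\mathbb{Z}$, \[ |A+B+C|\ge\min\{n,\ |A|+|B|+(c-2)\}. \]
   Context: For subsets $X,Y$ of an abelian group, $X+Y=\{x+y: x\in X, y\in Y\}$; elements of $C$ are taken modulo $n$. *)

(* Defs.v *)
From mathcomp Require Import all_boot all_algebra.
Set Implicit Arguments. Unset Strict Implicit. Unset Printing Implicit Defensive.

(* Z/nZ is modelled by 'I_n.+1 (i.e. modulus n.+1 >= 1), which carries
   MathComp's canonical zmodType structure (addition modulo n.+1). *)

Definition sumset (n : nat) (X Y : {set 'I_n.+1}) : {set 'I_n.+1} :=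
  [set (x + y)%R | x in X, y in Y].

Definition initC (n c : nat) : {set 'I_n.+1} :=
  [set (inZp (nat_of_ord k) : 'I_n.+1) | k : 'I_c].

(* Main.v *)
Require Import Defs.
From mathcomp Require Import all_boot all_algebra zify.
Import GRing.Theory.

Section S.
Variable n : nat.
Unset Implicit Arguments.
Local Open Scope ring_scope.
Local Notation G := 'I_n.+1.

Lemma inZpD (a b : nat) : (inZp (a + b)%N : G) = inZp a + inZp b.
Proof. by apply: val_inj; rewrite /= modnDm. Qed.

Definition one : G := inZp 1.

Lemma shift (A : {set G}) : A != set0 -> A != setT ->
  exists x, (x - one \in A) && (x \notin A).
Proof.
move=> /set0Pn [a Ha] nT.
apply/existsP; apply: contraR nT; rewrite negb_exists => /forallP H.
have Hk : forall k : nat, a + inZp k \in A.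
  elim=> [|k IH]; first by rewrite (_ : inZp 0 = 0) ?addr0 //; apply: val_inj.
  have := H (a + inZp k.+1); rewrite -addn1 inZpD addrA addrK IH /=.
  by rewrite negbK.
apply/eqP/setP => y; rewrite inE.
by rewrite -(subrK a y) addrC -(valZpK (y - a)) Hk.
Qed.

Lemma mem_sumset (X Y : {set G}) x y : x \in X -> y \in Y -> x + y \in sumset X Y.
Proof. by move=> hx hy; apply/imset2P; exists x y. Qed.

Lemma sumsetS (X X' Y : {set G}) : X \subset X' -> sumset X Y \subset sumset X' Y.
Proof.
move=> sX; apply/subsetP => z /imset2P [x y hx hy ->].
by apply: mem_sumset => //; apply: (subsetP sX).
Qed.

Lemma T2_self (X : {set G}) x : x \in X -> x \in sumset X (initC n 2%N).
Proof.
move=> hx; rewrite -[x]addr0; apply: mem_sumset => //.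
apply/imsetP; exists (@ord0 1) => //; exact: val_inj.
Qed.

Lemma T2_sh (X : {set G}) x : x - one \in X -> x \in sumset X (initC n 2%N).
Proof.
move=> hx; rewrite -(subrK one x); apply: mem_sumset => //.
by apply/imsetP; exists (@ord_max 1).
Qed.

Lemma L1 (Y : {set G}) : Y != set0 ->
  (minn n.+1 (#|Y| + 1) <= #|sumset Y (initC n 2%N)|)%N.
Proof.
move=> hY; case: (boolP (Y == setT)) => [/eqP ->|nT].
  rewrite geq_min; apply/orP; left.
  apply: leq_trans (subset_leq_card (_ : [set: G] \subset _));
    first by rewrite cardsT card_ord.
  by apply/subsetP => x _; apply: T2_self; rewrite inE.
have [x /andP [h1 h2]] := @shift Y hY nT.
rewrite geq_min; apply/orP; right.
have -> : (#|Y| + 1 = #|x |: Y|)%N by rewrite cardsU1 h2 addnC.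
apply: subset_leq_card; apply/subsetP => z; rewrite !inE => /orP [/eqP ->|hz].
  exact: T2_sh.
exact: T2_self.
Qed.

Lemma incl (X : {set G}) c :
  sumset (sumset X (initC n c.+1)) (initC n 2%N) \subset sumset X (initC n c.+2).
Proof.
apply/subsetP => z /imset2P [w j /imset2P [x k hx /imsetP [k' _ ->] ->] /imsetP [j' _ ->] ->].
rewrite -addrA -inZpD; apply: mem_sumset => //.
apply/imsetP.
have lt : (k' + j' < c.+2)%N by have := ltn_ord k'; have := ltn_ord j'; lia.
by exists (Ordinal lt).
Qed.

Lemma sumset_ne (X Y : {set G}) : X != set0 -> Y != set0 -> sumset X Y != set0.
Proof.
move=> /set0Pn [x hx] /set0Pn [y hy]; apply/set0Pn; exists (x + y).
exact: mem_sumset.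
Qed.

Lemma initC_ne c : initC n c.+1 != set0.
Proof. by apply/set0Pn; exists (inZp 0); apply/imsetP; exists ord0. Qed.

Lemma step1 (X : {set G}) c : X != set0 ->
  (minn n.+1 (#|X| + c) <= #|sumset X (initC n c.+1)|)%N.
Proof.
move=> hX; elim: c => [|c IH].
  rewrite addn0 geq_min; apply/orP; right; apply: subset_leq_card.
  apply/subsetP => x hx; rewrite -[x]addr0; apply: mem_sumset => //.
  by apply/imsetP; exists ord0 => //; apply: val_inj.
apply: leq_trans (subset_leq_card (incl X c)).
have H1 := L1 _ (sumset_ne _ _ hX (initC_ne c)). apply: leq_trans H1.
move: IH; lia.
Qed.

Lemma incl_gen (X : {set G}) p q :
  sumset (sumset X (initC n p.+1)) (initC n q.+1) \subset sumset X (initC n (p+q).+1).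
Proof.
apply/subsetP => z /imset2P [w j /imset2P [x k hx /imsetP [k' _ ->] ->] /imsetP [j' _ ->] ->].
rewrite -addrA -inZpD; apply: mem_sumset => //.
apply/imsetP.
have lt : (k' + j' < (p+q).+1)%N by have := ltn_ord k'; have := ltn_ord j'; lia.
by exists (Ordinal lt).
Qed.

Lemma core k : forall (A B : {set G}), (#|B| <= k)%N -> A != set0 -> B != set0 ->
  (minn n.+1 (#|A| + #|B|) <= #|sumset (sumset A B) (initC n 2%N)|)%N.
Proof.
elim: k => [|k IH] A B hk hA hB.
  by move: hB; rewrite -card_gt0; lia.
case: (boolP [exists a, exists b, exists b',
   [&& a \in A, b \in B, b' \in B & a + b' - b \notin A]]).
  move=> /existsP [a /existsP [b /existsP [b' /and4P [ha hb hb' hn]]]].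
  pose e := a - b.
  pose B' := [set y in B | y + e \in A].
  pose Be := [set y + e | y in B].
  pose A' := A :|: Be.
  have hbB' : b \in B' by rewrite inE hb /e addrC subrK ha.
  have pr : B' \proper B.
    apply/properP; split; first by apply/subsetP => y; rewrite inE => /andP [].
    by exists b' => //; rewrite inE hb' /e /= addrA (addrC b') hn.
  have cBe : #|Be| = #|B| by apply: card_imset; apply: addIr.
  have cI : #|A :&: Be| = #|B'|.
    have -> : A :&: Be = [set y + e | y in B'].
      apply/setP => z; apply/setIP/imsetP.
        move=> [hz /imsetP [y hy ez]]; exists y => //.
        by rewrite inE hy -ez hz.
      move=> [y]; rewrite inE => /andP [hy hye] ->; split => //.
      by apply/imsetP; exists y.
    by apply: card_imset; apply: addIr.
  have cU := cardsUI A Be.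
  have hB'k : (#|B'| <= k)%N by have := proper_card pr; lia.
  have hA' : A' != set0.
    by move: hA => /set0Pn [z hz]; apply/set0Pn; exists z; rewrite inE hz.
  have hB'0 : B' != set0 by apply/set0Pn; exists b.
  have := IH A' B' hB'k hA' hB'0.
  have sub : sumset A' B' \subset sumset A B.
    apply/subsetP => z /imset2P [x y hx hy ->].
    move: hy; rewrite inE => /andP [hy hye].
    move: hx; rewrite inE => /orP [hx|/imsetP [y' hy' ->]].
      exact: mem_sumset.
    by rewrite -addrA addrC (addrC e); apply: mem_sumset.
  have := subset_leq_card (sumsetS _ _ (initC n 2%N) sub).
  rewrite /A' cBe cI in cU *.
  lia.
rewrite negb_exists => /forallP H.
have Hc : forall a b b', a \in A -> b \in B -> b' \in B -> a + b' - b \in A.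
  move=> a b b' ha hb hb'; move: (H a); rewrite negb_exists => /forallP /(_ b); rewrite negb_exists => /forallP /(_ b').
  by rewrite ha hb hb' /= negbK.
move: (hB) => /set0Pn [b0 hb0].
pose S1 := [set a + b0 | a in A].
have cS1 : #|S1| = #|A| by apply: card_imset; apply: addIr.
have sS1 : S1 \subset sumset (sumset A B) (initC n 2%N).
  by apply/subsetP => z /imsetP [a ha ->]; apply: T2_self; apply: mem_sumset.
case: (boolP (A == setT)) => [/eqP eA|nT].
  have := subset_leq_card sS1; rewrite cS1 eA cardsT card_ord => h; exact: leq_trans (geq_minl _ _) h.
have [x /andP [h1 h2]] := @shift A hA nT.
pose S2 := [set x + b | b in B].
have cS2 : #|S2| = #|B| by apply: card_imset; apply: addrI.
have sS2 : S2 \subset sumset (sumset A B) (initC n 2%N).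
  apply/subsetP => z /imsetP [b hb ->]; apply: T2_sh.
  by rewrite addrAC; apply: mem_sumset.
have dI : S1 :&: S2 = set0.
  apply/setP => z; rewrite inE [RHS]inE; apply/negP => /andP [/imsetP [a ha ->] /imsetP [b hb e]].
  move: h2; rewrite (_ : x = a + b0 - b) ?Hc //.
  by rewrite e addrK.
have cU := cardsUI S1 S2.
rewrite dI cards0 cS1 cS2 addn0 in cU.
have : (S1 :|: S2) \subset sumset (sumset A B) (initC n 2%N) by rewrite subUset sS1 sS2.
move/subset_leq_card; rewrite cU => h; exact: leq_trans (geq_minr _ _) h.
Qed.
End S.

Theorem lemma3p5 (n c : nat) (hc : 2 <= c) (A B : {set 'I_n.+1})
    (hA : A != set0) (hB : B != set0) :
  minn n.+1 (#|A| + #|B| + (c - 2)) <= #|sumset (sumset A B) (initC n c)|.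
Proof.
case: c hc => [|[|d]] // _.
have X0 : sumset (sumset A B) (initC n 2) != set0
  by apply: sumset_ne; [apply: sumset_ne | apply: (initC_ne n 1)].
have h1 := @step1 n _ d X0.
have h2 := @core n _ A B (leqnn #|B|) hA hB.
have h3 := subset_leq_card (@incl_gen n (sumset A B) 1 d).
rewrite add1n in h3.
have : (minn n.+1 (#|A| + #|B| + d) <= #|sumset (sumset A B) (initC n d.+2)|)%N by lia.
by rewrite subn2.
Qed.
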